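(* Let $\mathcal{P}$ be a probability distribution on $\mathbb{R}$ and let $X$ be a random variable with distribution $\mathcal{P}$. Define $g(p) := \inf\{r \in \mathbb{R} : \mathbb{P}(X \geq r) \leq p\}$ for $0<p<1$. Assume that $\mathbb{E}|X| < \infty$, that $g(p) \to \infty$ as $p \to 0^+$, and that $g$ is slowly varying at zero, i.e. $g(\lambda p)/g(p) \to 1$ as $p \to 0^+$ for every fixed $\lambda > 0$. For $n\in\mathbb{N}$ let $M_n = \max_{1\le i\le n} X_i$, where $X_1,\dots,X_n$ are i.i.d. with distribution $\mathcal{P}$. Then $$\mathbb{E} M_n \geq g(1/n)(1+o(1)) \quad \text{as } n\to\infty.$$ *)

(* Defs.v *)
From HB Require Import structures.
From mathcomp Require Import all_boot all_order all_algebra.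
From mathcomp Require Import all_classical all_reals all_analysis.
Set Implicit Arguments. Unset Strict Implicit. Unset Printing Implicit Defensive.
Import Order.TTheory GRing.Theory Num.Theory.
Import numFieldNormedType.Exports.
Local Open Scope classical_set_scope.
Local Open Scope ring_scope.

Definition mutually_independent {d} {T : measurableType d} {R : realType}
    (Pr : probability T R) (X : nat -> {RV Pr >-> R}) : Prop :=
  forall (s : seq nat) (B : nat -> set R), uniq s ->
    (forall i, measurable (B i)) ->
    Pr (\big[setI/setT]_(i <- s) (X i @^-1` B i)) =
    (\prod_(i <- s) Pr (X i @^-1` B i))%E.

Definition has_distribution {d} {T : measurableType d} {R : realType}
    (Pr : probability T R) (X : {RV Pr >-> R}) (P : probability R R) : Prop :=
  forall A : set R, measurable A -> Pr (X @^-1` A) = P A.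

Definition upper_quantile {R : realType} (P : probability R R) (p : R) : R :=
  inf [set r : R | (P [set x : R | (r <= x)%R] <= p%:E)%E].

(** M_n = max_{1<=i<=n} X_i (indices shifted to 0..n-1; meaningful for n >= 1). *)
Definition maxRV {d} {T : measurableType d} {R : realType}
    (Pr : probability T R) (X : nat -> {RV Pr >-> R}) (n : nat) : T -> R :=
  fun t => \big[Num.max/X 0%N t]_(i < n) X i t.

(* Main.v *)
Require Import Defs.
From HB Require Import structures.
From mathcomp Require Import all_boot all_order all_algebra.
From mathcomp Require Import all_classical all_reals all_analysis.
From mathcomp Require Import measurable_realfun.
From mathcomp.algebra_tactics Require Import ring lra.
Import Order.TTheory GRing.Theory Num.Theory.
Import numFieldNormedType.Exports.
Local Open Scope classical_set_scope.
Local Open Scope ring_scope.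

Lemma big_apply (I T S : Type) (op : S -> S -> S) (idx : T -> S) (F : I -> T -> S) r t :
  (\big[(fun f g => fun x => op (f x) (g x))/idx]_(i <- r) F i) t
  = \big[op/idx t]_(i <- r) F i t.
Proof.
elim: r => [|i r IH]; first by rewrite !big_nil.
by rewrite !big_cons IH.
Qed.

Lemma maxRV_fun (R : realType) d (T : measurableType d) (Pr : probability T R)
  (X : nat -> {RV Pr >-> R}) n :
  maxRV X n = \big[(fun f g => fun x => Num.max (f x) (g x))/(X 0%N : T -> R)]_(i < n) (X i : T -> R).
Proof. by apply/funext => t; rewrite big_apply. Qed.

Lemma maxRV_ge (R : realType) d (T : measurableType d) (Pr : probability T R)
  (X : nat -> {RV Pr >-> R}) n t : X 0%N t <= maxRV X n t.
Proof.
rewrite /maxRV; elim/big_rec: _ => // i x _ H.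
by rewrite le_max H orbT.
Qed.

Lemma maxRV_gei (R : realType) d (T : measurableType d) (Pr : probability T R)
  (X : nat -> {RV Pr >-> R}) n t (i : 'I_n) : X i t <= maxRV X n t.
Proof.
rewrite /maxRV (big_rem_AC _ _ _ _ (mem_index_enum i)) /=.
by rewrite le_max lexx.
Qed.

Lemma maxRV_lt (R : realType) d (T : measurableType d) (Pr : probability T R)
  (X : nat -> {RV Pr >-> R}) n t s : X 0%N t < s -> (forall i : 'I_n, X i t < s) ->
  maxRV X n t < s.
Proof.
move=> H0 Hi; rewrite /maxRV; elim/big_ind: _ => //.
by move=> x y Hx Hy; rewrite gt_max Hx Hy.
Qed.

Lemma measurable_maxRV (R : realType) d (T : measurableType d) (Pr : probability T R)
  (X : nat -> {RV Pr >-> R}) n : measurable_fun setT (maxRV X n).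
Proof.
rewrite maxRV_fun; elim/big_ind: _ => //.
move=> f g mf mg.
by rewrite (_ : (fun x => _) = f \max g) //; exact: measurable_maxr.
Qed.

Lemma int_absX (R : realType) (P : probability R R)
  d (T : measurableType d) (Pr : probability T R) (Y : {RV Pr >-> R}) :
  has_distribution Y P ->
  (\int[Pr]_w (`|Y w|)%:E = \int[P]_x (`|x|)%:E)%E.
Proof.
move=> HY.
rewrite [RHS](eq_measure_integral (distribution Pr Y)); last first.
  by move=> A mA _; apply/esym/HY.
rewrite ge0_integral_distribution //.
by apply/measurableT_comp => //; exact: measurableT_comp.
Qed.

Lemma integrable_X (R : realType) (P : probability R R)
  d (T : measurableType d) (Pr : probability T R) (Y : {RV Pr >-> R}) :
  (\int[P]_x (`|x|)%:E < +oo)%E -> has_distribution Y P ->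
  Pr.-integrable setT (EFin \o Y).
Proof.
move=> HI HY; apply/integrableP; split.
  by apply/measurableT_comp => //; exact: measurable_funPT.
under eq_integral do rewrite /=.
by rewrite (@int_absX _ _ _ _ _ _ HY).
Qed.

Lemma norm_max_le (R : realType) (x y : R) : `|Num.max x y| <= `|x| + `|y|.
Proof.
have [fg|gf] := leP x y.
  by rewrite lerDr.
by rewrite lerDl.
Qed.

Lemma integrable_maxRV (R : realType) (P : probability R R)
  d (T : measurableType d) (Pr : probability T R) (X : nat -> {RV Pr >-> R}) n :
  (\int[P]_x (`|x|)%:E < +oo)%E -> (forall i, has_distribution (X i) P) ->
  Pr.-integrable setT (EFin \o maxRV X n).
Proof.
move=> HI HX; rewrite maxRV_fun; elim/big_ind: _ => //.
- exact: (@integrable_X _ _ _ _ _ _ HI (HX 0%N)).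
- move=> f g If Ig.
  apply: (@le_integrable _ _ _ _ _ measurableT _ (fun t => `|(f t)%:E| + `|(g t)%:E|)%E).
  + apply/measurableT_comp => //.
    rewrite (_ : (fun x => _) = f \max g) //; apply: measurable_maxr.
      by have /measurable_EFinP := @measurable_int _ _ _ _ _ _ If.
    by have /measurable_EFinP := @measurable_int _ _ _ _ _ _ Ig.
  + move=> t _ /=.
    rewrite lee_fin [X in _ <= X]ger0_norm ?addr_ge0 //.
    exact: norm_max_le.
  + by apply: integrableD => //; apply: integrable_abse.
- by move=> i _; exact: (@integrable_X _ _ _ _ _ _ HI (HX i)).
Qed.

Lemma measurable_ge_set (R : realType) (t : R) : measurable [set x : R | t <= x].
Proof.
rewrite (_ : [set x | t <= x] = `[t, +oo[%classic); first exact: measurable_itv.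
by apply/seteqP; split => x /=; rewrite in_itv /= andbT.
Qed.

Lemma lemmaA (R : realType) (P : probability R R)
  d (T : measurableType d) (Pr : probability T R) (X : nat -> {RV Pr >-> R}) (n : nat) (t : R) :
  (\int[P]_x (`|x|)%:E < +oo)%E -> (forall i, has_distribution (X i) P) ->
  0 <= t ->
  ((t%:E * Pr [set w | (t <= maxRV X n w)%R]) - \int[P]_x (`|x|)%:E <= 'E_Pr[maxRV X n])%E.
Proof.
move=> HI HX t0.
set M := maxRV X n.
pose h : T -> R := fun w => `|X 0%N w|.
have iM := @integrable_maxRV _ _ _ _ _ X n HI HX.
have ih : Pr.-integrable setT (EFin \o h).
  apply/integrableP; split.
    by apply/measurableT_comp => //; apply/measurableT_comp => //.
  under eq_integral do rewrite /= normr_id.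
  by rewrite (@int_absX _ _ _ _ _ _ (HX 0%N)).
have iMh : Pr.-integrable setT (EFin \o (fun w => M w + h w)).
  apply: eq_integrable (integrableD measurableT iM ih) => //.
have mA : measurable [set w | t <= M w].
  rewrite -[X in measurable X]setTI.
  have := (@measurable_maxRV _ _ _ _ X n measurableT _ (@measurable_ge_set _ t)).
  by [].
have -> : ('E_Pr[M] = \int[Pr]_w ((M w + h w)%:E - (h w)%:E))%E.
  by rewrite unlock; apply: eq_integral => w _; rewrite -EFinB addrK.
rewrite integralB_EFin //.
rewrite -(@int_absX _ _ _ _ _ _ (HX 0%N)).
apply: leeB => //.
have -> : (t%:E * Pr [set w | (t <= M w)%R] = \int[Pr]_w (t * \1_[set w | (t <= M w)%R] w)%:E)%E.
  under eq_integral do rewrite EFinM.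
  rewrite ge0_integralZl //.
  - by rewrite integral_indic // setIT.
  - by apply/measurableT_comp => //; exact: measurable_indic.
apply: ge0_le_integral => //.
- by move=> w _; rewrite lee_fin mulr_ge0.
- apply/measurable_EFinP.
  rewrite (_ : (fun x => _) = (cst t) \* \1_[set w | (t <= M w)%R]) //.
  by apply: measurable_funM => //; exact: measurable_indic.
- exact: (@measurable_int _ _ _ _ _ _ iMh).
- move=> w _; rewrite lee_fin indicE.
  have hge : 0 <= M w + h w.
    by rewrite -lerBlDr sub0r (le_trans _ (@maxRV_ge _ _ _ _ X n w)) // lerNl ler_normr lexx orbT.
  case: (boolP (w \in _)) => [/set_mem tM|_]; last by rewrite mulr0.
  by rewrite mulr1 (le_trans tM) // lerDl /h.
Qed.

Lemma bigsetI_mem (I : eqType) (T : Type) (s : seq I) (F : I -> set T) w :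
  (\big[setI/setT]_(i <- s) F i) w <-> (forall i, i \in s -> F i w).
Proof.
elim: s => [|i s IH]; first by rewrite big_nil; split => // _ i.
rewrite big_cons; split.
  move=> [Fi /IH H] j; rewrite in_cons => /orP[/eqP -> //|]; exact: H.
move=> H; split; first by apply: H; rewrite in_cons eqxx.
by apply/IH => j Hj; apply: H; rewrite in_cons Hj orbT.
Qed.

Lemma measurable_lt_set (R : realType) (t : R) : measurable [set x : R | x < t].
Proof.
rewrite (_ : [set x | x < t] = `]-oo, t[%classic); first exact: measurable_itv.
by apply/seteqP; split => x /=; rewrite in_itv.
Qed.

Lemma lemmaB (R : realType) (P : probability R R)
  d (T : measurableType d) (Pr : probability T R) (X : nat -> {RV Pr >-> R})
  (n : nat) (t Q : R) :
  mutually_independent X -> (forall i, has_distribution (X i) P) ->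
  P [set x | t <= x] = Q%:E ->
  Pr [set w | (t <= maxRV X n.+1 w)%R] = (1 - (1 - Q) ^+ n.+1)%:E.
Proof.
move=> Hind HX HQ.
pose B := [set x : R | x < t].
have mB : measurable B := @measurable_lt_set _ t.
pose S := \big[setI/setT]_(i <- index_iota 0 n.+1) (X i @^-1` B).
have mS : measurable S.
  apply: bigsetI_measurable => i _.
  rewrite -[X in measurable X]setTI; apply: (measurable_funPT (X i)) => //.
have -> : [set w | (t <= maxRV X n.+1 w)%R] = ~` S.
  apply/seteqP; split => w /=.
    move=> tM /bigsetI_mem H.
    have : maxRV X n.+1 w < t.
      apply: maxRV_lt.
        by apply: (H 0%N); rewrite mem_index_iota.
      move=> i; apply: H; rewrite mem_index_iota; exact: ltn_ord.
    by rewrite ltNge tM.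
  move=> nS; rewrite leNgt; apply/negP => Mt; apply: nS.
  apply/bigsetI_mem => i; rewrite mem_index_iota => /andP[_ Hi].
  exact: (le_lt_trans (@maxRV_gei _ _ _ _ X n.+1 w (Ordinal Hi)) Mt).
rewrite probability_setC // /S Hind //; last exact: iota_uniq.
rewrite (eq_bigr (fun _ => (1 - Q)%:E)); last first.
  move=> i _; rewrite HX //.
  have -> : B = ~` [set x | t <= x].
    apply/seteqP; split => x; rewrite /B /=.
      by rewrite ltNge => /negP.
    by move/negP; rewrite -ltNge.
  rewrite probability_setC ?HQ //; exact: measurable_ge_set.
by rewrite prodEFin prodr_const_nat subn0.
Qed.
Lemma bern (R : realType) (Q : R) (n : nat) : 0 <= Q <= 1 ->
  (1 - Q) ^+ n * (1 + n%:R * Q) <= 1.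
Proof.
move=> /andP[Q0 Q1]; elim: n => [|n IH]; first by rewrite expr0 mul0r addr0 mul1r.
have y0 : 0 <= (1 - Q) ^+ n by apply: exprn_ge0; lra.
have m0 : 0 <= n%:R :> R by [].
rewrite exprSr -mulrA mulrSr.
set y := (1 - Q) ^+ n in IH y0 *.
set m := n%:R in IH m0 *.
have h1 : 0 <= y * (Q * Q * (m + 1)) by apply: mulr_ge0 => //; apply: mulr_ge0; nra.
nra.
Qed.
Lemma near0r_inv (R : realType) (Q : R -> Prop) :
  (\forall p \near 0^'+, Q p) -> \forall n \near \oo, Q (n%:R^-1).
Proof.
rewrite near_withinE => /nbhs_ballP [e /= e0 He].
have [N _ HN] := near_infty_natSinv_lt (PosNum e0).
exists N.+1 => // n /= HnN.
case: n HnN => // m Hm.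
apply: He; last by rewrite invr_gt0 ltr0n.
rewrite /ball /= sub0r normrN ger0_norm ?invr_ge0 ?ler0n //.
exact: HN.
Qed.

Lemma quantile_gt (R : realType) (P : probability R R) q t :
  0 < upper_quantile P q -> t < upper_quantile P q ->
  (q%:E < P [set x | (t <= x)%R])%E.
Proof.
move=> g0 tg; rewrite ltNge; apply/negP => Ht.
have St : [set r : R | (P [set x : R | (r <= x)%R] <= q%:E)%E] t by [].
have [lb|nlb] := pselect (has_lbound [set r : R | (P [set x : R | (r <= x)%R] <= q%:E)%E]).
  have := ge_inf lb St; rewrite -/(upper_quantile P q) => H.
  by move: tg; rewrite ltNge H.
move: g0; rewrite /upper_quantile inf_out ?ltxx //.
by case.
Qed.

Lemma lemmaD (R : realType) (P : probability R R)
  d (T : measurableType d) (Pr : probability T R) (X : nat -> {RV Pr >-> R})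
  (n : nat) (lam t c : R) :
  (\int[P]_x (`|x|)%:E = c%:E)%E ->
  mutually_independent X -> (forall i, has_distribution (X i) P) ->
  0 < lam -> 0 <= t -> 0 < upper_quantile P (lam * n.+1%:R^-1) ->
  t < upper_quantile P (lam * n.+1%:R^-1) ->
  ((t * (lam / (1 + lam)) - c)%:E <= 'E_Pr[maxRV X n.+1])%E.
Proof.
move=> Hc Hind HX lam0 t0 g0 tg.
have HI : (\int[P]_x (`|x|)%:E < +oo)%E by rewrite Hc ltry.
have Hgt := @quantile_gt _ _ _ _ g0 tg.
have Hle1 : (P [set x | (t <= x)%R] <= 1)%E by apply: probability_le1; exact: measurable_ge_set.
have Hge0 : (0 <= P [set x | (t <= x)%R])%E by [].
move: Hgt Hle1 Hge0.
case EQ: (P [set x | (t <= x)%R]) => [Q| |] //; rewrite ?lte_fin ?lee_fin => HQ Q1 Q0.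
have HB := @lemmaB _ _ _ _ _ X n t Q Hind HX EQ.
have HA := @lemmaA _ _ _ _ _ X n.+1 t HI HX t0.
rewrite HB Hc in HA.
apply: le_trans HA.
rewrite -EFinM -EFinB lee_fin lerD2r ler_wpM2l //.
have N0 : (0 < n.+1%:R :> R) by rewrite ltr0n.
have lQ : lam < Q * n.+1%:R by rewrite -ltr_pdivrMr // mulrC.
have hb := @bern _ Q n.+1 (andb_true_intro (conj Q0 Q1)).
set y := (1 - Q) ^+ n.+1 in hb *.
have y0 : 0 <= y by apply: exprn_ge0; lra.
rewrite ler_pdivrMr; last lra.
have : y * (1 + lam) <= 1.
  apply: le_trans hb; apply: ler_wpM2l => //; nra.
nra.
Qed.

Theorem proposition2 (R : realType) (P : probability R R)
  (d : measure_display) (T : measurableType d) (Pr : probability T R)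
  (X : nat -> {RV Pr >-> R}) :
  (\int[P]_x (`|x|)%:E < +oo)%E ->
  upper_quantile P p @[p --> 0^'+] --> +oo ->
  (forall lam : R, 0 < lam ->
     upper_quantile P (lam * p) / upper_quantile P p @[p --> 0^'+] --> (1:R)) ->
  mutually_independent X ->
  (forall i, has_distribution (X i) P) ->
  exists e : nat -> R, e @ \oo --> 0 /\
    \forall n \near \oo,
      ('E_Pr[maxRV X n] >= (upper_quantile P n%:R^-1 * (1 + e n))%:E)%E.
Proof.
move=> HI Hg Hslow Hind HX.
have [c Hc] : exists c : R, (\int[P]_x (`|x|)%:E = c%:E)%E.
  have H0 : (0 <= \int[P]_x (`|x|)%:E)%E by apply: integral_ge0 => x _; rewrite lee_fin.
  move: H0 HI; case: (\int[P]_x (`|x|)%:E)%E => [r| |] // _ _; by exists r.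
have Hlow : forall n, ((- c)%:E <= 'E_Pr[maxRV X n])%E.
  move=> n; have := @lemmaA _ _ _ _ _ X n 0 HI HX (lexx 0).
  by rewrite mul0e sub0e Hc.
move/cvgryPgt: Hg => Hg.
pose e n := match 'E_Pr[maxRV X n]%E with
            | r%:E => Num.min 0 (r / upper_quantile P n%:R^-1 - 1)
            | _ => 0 end.
exists e; split; last first.
  apply: filterS (@near0r_inv _ _ (Hg 0)) => n gpos.
  rewrite /e; have := Hlow n.
  case: ('E_Pr[maxRV X n])%E => [r| |] // _; last by rewrite leey.
  rewrite lee_fin.
  have [h|h] := leP 0 (r / upper_quantile P n%:R^-1 - 1).
    rewrite addr0 mulr1.
    by move: h; rewrite subr_ge0 ler_pdivlMr // mul1r.
  by rewrite addrCA subrr addr0 mulrC divfK // gt_eqF.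
have c0 : 0 <= c.
  have H0 : (0 <= \int[P]_x (`|x|)%:E)%E by apply: integral_ge0 => x _; rewrite lee_fin.
  by move: H0; rewrite Hc lee_fin.
apply/cvgr0Pnorm_le => eps eps0.
pose eta := Num.min eps 1 / 3.
have eta0 : 0 < eta by rewrite divr_gt0 // lt_min eps0 ltr01.
have eta13 : eta <= 1 / 3 by rewrite ler_pM2r // ge_min lexx orbT.
have eta3 : 3 * eta <= eps by rewrite /eta mulrC divfK // ge_min lexx.
pose lam := eta^-1.
have lam0 : 0 < lam by rewrite invr_gt0.
pose K := (1 + c) / eta + 2.
have Hr := Hslow lam lam0.
move/cvgrPdist_le: Hr => /(_ eta eta0) Hr.
near=> n.
have n1 : (0 < n)%N by near: n; exists 1%N.
have r1 : `|1 - upper_quantile P (lam * n%:R^-1) / upper_quantile P n%:R^-1| <= eta.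
  by near: n; exact: (@near0r_inv _ _ Hr).
have r2 : K < upper_quantile P n%:R^-1.
  by near: n; exact: (@near0r_inv _ _ (Hg K)).
move: r1 r2; rewrite -(prednK n1); set m := n.-1 => r1 r2.
set G := upper_quantile P m.+1%:R^-1 in r1 r2 *.
set G' := upper_quantile P (lam * m.+1%:R^-1) in r1 *.
have K2 : 2 <= K by rewrite /K lerDr divr_ge0 // ?ltW //; lra.
have G0 : 0 < G by lra.
have rho1 : 1 - eta <= G' / G.
  by move: r1; rewrite ler_norml => /andP[_ h]; lra.
have G'E : G' = G' / G * G by rewrite divfK // gt_eqF.
have Gc : 1 + c <= eta * G.
  have : (1 + c) / eta < G by apply: le_lt_trans r2; rewrite /K lerDl.
  by rewrite ltr_pdivrMr // mulrC => /ltW.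
have G'1 : 1 <= G'.
  rewrite G'E; apply: le_trans (ler_wpM2r (ltW G0) rho1); nra.
have lameta : lam * eta = 1 by rewrite mulVf // gt_eqF.
have a1 : lam / (1 + lam) <= 1 by rewrite ler_pdivrMr ?mul1r; lra.
have a2 : 1 - eta <= lam / (1 + lam) by rewrite ler_pdivlMr; nra.
have a0 : 0 <= lam / (1 + lam) by rewrite divr_ge0 //; lra.
have L := @lemmaD _ _ _ _ _ X m lam (G' - 1) c Hc Hind HX lam0.
have L' : (((G' - 1) * (lam / (1 + lam)) - c)%:E <= 'E_Pr[maxRV X m.+1])%E.
  apply: L; [lra | lra | rewrite -/G'; lra].
rewrite /e; move: L'.
case: ('E_Pr[maxRV X m.+1])%E => [r| |] /= Lr; [|by rewrite normr0 ltW|by rewrite normr0 ltW].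
move: Lr; rewrite lee_fin => Lr.
have [h|h] := leP 0 (r / G - 1); first by rewrite normr0 ltW.
rewrite ltr0_norm // opprB lerBlDr.
rewrite -lerBlDl ler_pdivlMr //.
set a := lam / (1 + lam) in a1 a2 a0 Lr.
have h1 : (1 - eta) * G <= G' by rewrite G'E; apply: ler_wpM2r => //; exact: ltW.
have h2 : (1 - eta) * G * (1 - eta) <= G' * a.
  apply: le_trans (ler_wpM2r a0 h1); apply: ler_wpM2l => //; nra.
nra.
Unshelve. all: end_near.
Qed.
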